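(* Let $\mathbf G=(G,\le,\cdot,/,0,1)$ be a left-residuated po-groupoid. Then $\mathbf G$ satisfies both the double negation law $\neg\neg x=x$ (for all $x$) and the condition $$\neg x/y\le \neg z\iff z\le x\cdot y\quad\text{for all }x,y,z\in G$$ if and only if $\mathbf G$ satisfies the equation $x\cdot y=\neg(\neg x/y)$ for all $x,y\in G$. Moreover, in this case, for all $x,y\in G$ we have $x\le y$ iff $\neg y\le \neg x$.
   Context: A (bounded integral) left-residuated po-groupoid is a structure $\mathbf G=(G,\le,\cdot,/,0,1)$ where $(G,\le,0,1)$ is a bounded poset with least element $0$ and greatest element $1$, $\cdot$ is a binary operation on $G$ with $1\cdot x=x\cdot 1=x$ for all $x$ (no associativity, commutativity or monotonicity is assumed), and $/$ is a binary operation on $G$ satisfying the left residuation law: for all $x,y,z\in G$, $x\cdot y\le z\iff x\le z/y$. The negation is defined by $\neg x:=0/x$. *)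

(* Defs.v *)
(* A bounded integral left-residuated po-groupoid (G, <=, *, /, 0, 1). *)
Record LRPoGroupoid := {
  car :> Type;
  le : car -> car -> Prop;
  mul : car -> car -> car;
  rdiv : car -> car -> car;
  bot : car;
  top : car;
  le_refl : forall x, le x x;
  le_antisym : forall x y, le x y -> le y x -> x = y;
  le_trans : forall x y z, le x y -> le y z -> le x z;
  bot_least : forall x, le bot x;
  top_greatest : forall x, le x top;
  mul_1l : forall x, mul top x = x;
  mul_1r : forall x, mul x top = x;
  residuation : forall x y z, le (mul x y) z <-> le x (rdiv z y)
}.

Definition neg (G : LRPoGroupoid) (x : G) : G := rdiv G (bot G) x.

(* Main.v *)
Require Import Defs.

Lemma div_one (G : LRPoGroupoid) (a : G) : rdiv G a (top G) = a.
Proof.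
  apply le_antisym.
  - apply (le_trans G _ (mul G (rdiv G a (top G)) (top G))).
    rewrite mul_1r; apply le_refl. apply residuation, le_refl.
  - apply residuation. rewrite mul_1r; apply le_refl.
Qed.

Lemma neg_top (G : LRPoGroupoid) : neg G (top G) = bot G.
Proof. unfold neg. apply div_one. Qed.

Lemma div_top (G : LRPoGroupoid) (a b : G) : le G a b -> rdiv G b a = top G.
Proof.
  intro H. apply le_antisym. apply top_greatest.
  apply residuation. rewrite mul_1l. exact H.
Qed.

Theorem lemma2 (G : LRPoGroupoid) :
  (((forall x : G, neg G (neg G x) = x) /\
    (forall x y z : G,
       le G (rdiv G (neg G x) y) (neg G z) <-> le G z (mul G x y)))
   <->
   (forall x y : G, mul G x y = neg G (rdiv G (neg G x) y)))
  /\
  ((forall x y : G, mul G x y = neg G (rdiv G (neg G x) y)) ->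
   forall x y : G, le G x y <-> le G (neg G y) (neg G x)).
Proof.
  assert (BW : (forall x y : G, mul G x y = neg G (rdiv G (neg G x) y)) ->
    (forall x : G, neg G (neg G x) = x) /\
    (forall x y : G, le G x y -> le G (neg G y) (neg G x))).
  { intro E.
    assert (DN : forall x : G, neg G (neg G x) = x).
    { intro x. rewrite <- (div_one G (neg G x)). rewrite <- E. apply mul_1r. }
    split; [exact DN|].
    intros a b H. unfold neg at 2. apply residuation.
    rewrite E, DN, div_top by exact H. rewrite neg_top. apply le_refl. }
  assert (GAL : forall (DN : forall x : G, neg G (neg G x) = x)
      (AT : forall x y : G, le G x y -> le G (neg G y) (neg G x)) (a z : G),
      le G a (neg G z) -> le G z (neg G a)).
  { intros DN AT a z H. apply AT in H. rewrite DN in H. exact H. }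
  split; [split|].
  - intros [DN C] x y.
    assert (AT : forall a b : G, le G a b -> le G (neg G b) (neg G a)).
    { intros a b H. pose proof (C (top G) b a) as Cb.
      rewrite neg_top in Cb. rewrite mul_1l in Cb. apply Cb. exact H. }
    apply le_antisym.
    + rewrite <- (DN (mul G x y)). apply AT. apply C. apply le_refl.
    + apply C. rewrite DN. apply le_refl.
  - intro E. destruct (BW E) as [DN AT]. split; [exact DN|].
    intros x y z. rewrite (E x y). split; intro H.
    + apply GAL; assumption.
    + apply GAL; assumption.
  - intros E x y. destruct (BW E) as [DN AT]. split; [apply AT|].
    intro H. apply AT in H. rewrite !DN in H. exact H.
Qed.
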